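(* Let $\mathbf{P}$ be the transition matrix of a Markov chain on a finite state space $V$, let $L\ge0$, $\ell=2^L$, $w_0\in V$, and let $\rho\ge 1$ be an integer. Maintain sequences whose entries are indexed by times in $\{0,1,\dots,\ell\}$. Initially $W_1$ has entry $w_0$ at time $0$ and entry $w_\ell\sim\mathbf{P}^\ell[w_0,\cdot]$ at time $\ell$. At level $i=1,\dots,L$, with $\delta=\ell/2^{i-1}$, the current sequence $W_i$ has entries at times $0,\delta,2\delta,\dots,\ell_i$ for some $\ell_i\le \ell$; between every pair of consecutive entries $x$ (at time $s$) and $x'$ (at time $s+\delta$) insert, at time $s+\delta/2$, a vertex $y$ drawn (conditionally independently given the past) with probability $\mathbf{P}^{\delta/2}[x,y]\mathbf{P}^{\delta/2}[y,x']/\mathbf{P}^{\delta}[x,x']$; then, if the resulting sequence contains at least $\rho$ distinct vertices, delete all entries at times after the first entry at which the $\rho$-th distinct vertex appears. Call the result $W_{i+1}$. Then $W_{L+1}$ has the same distribution as $(X_0,X_1,\dots,X_\tau)$, where $(X_t)$ is the Markov chain with transition matrix $\mathbf{P}$ started at $w_0$ and $\tau$ is the minimum of $\ell$ and the first time $t$ at which $\{X_0,\dots,X_t\}$ contains $\rho$ distinct vertices. *)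

(* Defs.v *)
From mathcomp Require Import all_boot all_order all_algebra.
Set Implicit Arguments. Unset Strict Implicit. Unset Printing Implicit Defensive.
Import Order.TTheory GRing.Theory Num.Theory.
Local Open Scope ring_scope.

Section MarkovBridge.
Variables (R : realFieldType) (V : finType) (P : V -> V -> R).

Definition stochastic : Prop :=
  (forall x y, 0 <= P x y) /\ (forall x, \sum_y P x y = 1).

Fixpoint Ppow (k : nat) : V -> V -> R :=
  match k with
  | 0 => fun x y => (x == y)%:R
  | k'.+1 => fun x y => \sum_z Ppow k' x z * P z y
  end.

Definition ndistinct (s : seq V) : nat := size (undup s).

(* first index k such that s_0..s_k contains at least rho distinct vertices
   (= size s if there is none) *)
Definition first_hit (rho : nat) (s : seq V) : nat :=
  find (fun k => (rho <= ndistinct (take k.+1 s))%N) (iota 0 (size s)).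

Definition trunc (rho : nat) (s : seq V) : seq V := take (first_hit rho s).+1 s.

(* interleave: x0 y1 x1 y2 x2 ... ym xm *)
Fixpoint refine (s ys : seq V) : seq V :=
  match s, ys with
  | x :: ((_ :: _) as s'), y :: ys' => x :: y :: refine s' ys'
  | _, _ => s
  end.

Definition bridge (h : nat) (x y x' : V) : R :=
  Ppow h x y * Ppow h y x' / Ppow (2 * h)%N x x'.

Fixpoint bweight (h : nat) (s ys : seq V) : R :=
  match s, ys with
  | x :: ((x' :: _) as s'), y :: ys' => bridge h x y x' * bweight h s' ys'
  | _, _ => 1
  end.

Definition init (L : nat) (w0 : V) (s : seq V) : R :=
  match s with
  | [:: x; w] => (x == w0)%:R * Ppow (2 ^ L)%N w0 w
  | _ => 0
  end.

(* Wdist L rho w0 k = probability mass function of W_{k+1}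
   (entries listed in time order; spacing 2^(L-k)).  Level i = k+1 uses
   delta = 2^(L-k) and half-step h = 2^(L-k-1). *)
Fixpoint Wdist (L rho : nat) (w0 : V) (k : nat) : seq V -> R :=
  match k with
  | 0 => init L w0
  | k'.+1 => fun s =>
      let h := (2 ^ (L - k'.+1))%N in
      \sum_(n < (2 ^ L).+2) \sum_(t : n.-tuple V)
        Wdist L rho w0 k' t *
        \sum_(ys : (n.-1).-tuple V)
          bweight h t ys * (trunc rho (refine t ys) == s)%:R
  end.

Fixpoint pathw (s : seq V) : R :=
  match s with
  | x :: ((x' :: _) as s') => P x x' * pathw s'
  | _ => 1
  end.

Definition tau (L rho : nat) (x : seq V) : nat := minn (2 ^ L) (first_hit rho x).

Definition stopped_dist (L rho : nat) (w0 : V) (s : seq V) : R :=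
  \sum_(x : (2 ^ L).-tuple V)
    pathw (w0 :: x) * (take (tau L rho (w0 :: x)).+1 (w0 :: x) == s)%:R.

End MarkovBridge.

(* Main.v *)
Require Import Defs.
From mathcomp Require Import all_boot all_order all_algebra.
Import GRing.Theory Num.Theory.
Local Open Scope ring_scope.

Section Proof.
Variables (R : realFieldType) (V : finType) (P : V -> V -> R).

Fixpoint sumseq (n : nat) (F : seq V -> R) : R :=
  match n with
  | 0 => F [::]
  | n'.+1 => \sum_x sumseq n' (fun s => F (x :: s))
  end.

Lemma sumseq_ext n F G : (forall s, size s = n -> F s = G s) ->
  sumseq n F = sumseq n G.
Proof.
elim: n F G => [|n IH] F G H /=; first by rewrite H.
apply: eq_bigr => x _; apply: IH => s Hs; apply: H; by rewrite /= Hs.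
Qed.

Lemma sumseq_mull n a F : a * sumseq n F = sumseq n (fun s => a * F s).
Proof.
elim: n F => [|n IH] F //=; rewrite mulr_sumr; apply: eq_bigr => x _; exact: IH.
Qed.

Lemma sumseq_mulr n a F : sumseq n F * a = sumseq n (fun s => F s * a).
Proof.
rewrite mulrC sumseq_mull; apply: sumseq_ext => s _; exact: mulrC.
Qed.

Lemma sumseq_sum n (I : Type) (r : seq I) (Q : pred I) (F : I -> seq V -> R) :
  \sum_(i <- r | Q i) sumseq n (F i) = sumseq n (fun s => \sum_(i <- r | Q i) F i s).
Proof.
elim: n F => [|n IH] F //=.
rewrite exchange_big; apply: eq_bigr => x _; exact: IH.
Qed.

Lemma tuple_sumseq n (F : seq V -> R) :
  \sum_(t : n.-tuple V) F t = sumseq n F.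
Proof.
elim: n F => [|n IH] F /=.
  rewrite (big_pred1 [tuple]) // => t; by rewrite [t]tuple0 /= eq_refl.
rewrite (reindex (fun p : V * n.-tuple V => cons_tuple p.1 p.2)) /=.
  rewrite -(pair_big predT predT (fun x (t : n.-tuple V) => F (x :: t))) /=.
  apply: eq_bigr => x _; exact: IH.
exists (fun t : n.+1.-tuple V => (thead t, behead_tuple t)) => [[x t] _|t _].
  by congr (_, _); apply: val_inj.
apply: val_inj => /=; case: t => [[|x s] Hs] //=.
Qed.

Lemma collapse (u : seq V) N (G : nat -> seq V -> R) : (size u < N)%N ->
  \sum_(n < N) \sum_(t : n.-tuple V) ((u == t)%:R * G n t) = G (size u) u.
Proof.
move=> Hu.
rewrite (bigD1 (Ordinal Hu)) //= [X in _ + X]big1 ?addr0.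
  rewrite (bigD1 (@Tuple (size u) V u (eqxx _))) //= eqxx mul1r.
  rewrite [X in _ + X]big1 ?addr0 //.
  move=> t Ht; case: eqP => [E|]; last by rewrite mul0r.
  have Et : t = (@Tuple (size u) V u (eqxx _)) by apply: val_inj.
  by rewrite Et eqxx in Ht.
move=> n Hn; apply: big1 => t _; case: eqP => [E|]; last by rewrite mul0r.
have Hs : size u = n by rewrite E size_tuple.
by case/eqP: Hn; apply: val_inj.
Qed.

Hypothesis Hst : stochastic P.

Lemma Ppow_ge0 k x y : 0 <= Ppow P k x y.
Proof.
elim: k x y => [|k IH] x y /=; first by rewrite ler0n.
apply: sumr_ge0 => z _; apply: mulr_ge0 => //; exact: Hst.1.
Qed.

Lemma Ppow_add a b x z : Ppow P (a + b) x z = \sum_y Ppow P a x y * Ppow P b y z.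
Proof.
elim: b z => [|b IH] z /=.
  rewrite addn0 (bigD1 z) //= eqxx mulr1 big1 ?addr0 // => y Hy.
  by rewrite (negbTE Hy) mulr0.
rewrite addnS /=.
under eq_bigr do rewrite IH mulr_suml.
rewrite exchange_big; apply: eq_bigr => y _.
rewrite mulr_sumr; apply: eq_bigr => w _; by rewrite mulrA.
Qed.

Lemma Ppow1 x y : Ppow P 1 x y = P x y.
Proof.
rewrite /= (bigD1 x) //= eqxx mul1r big1 ?addr0 // => z Hz.
by rewrite eq_sym (negbTE Hz) mul0r.
Qed.

Lemma bridgeE h x y x' :
  Ppow P (2 * h) x x' * bridge P h x y x' = Ppow P h x y * Ppow P h y x'.
Proof.
rewrite /bridge; case: (eqVneq (Ppow P (2 * h) x x') 0) => H.
  rewrite H mul0r; apply/esym.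
  have H2 : \sum_y Ppow P h x y * Ppow P h y x' = 0 by rewrite -Ppow_add addnn -mul2n.
  apply: (psumr_eq0P _ H2) => // i _; apply: mulr_ge0; exact: Ppow_ge0.
by rewrite mulrC divfK.
Qed.

Lemma bridge_sum h x x' :
  Ppow P (2 * h) x x' * \sum_y bridge P h x y x' = Ppow P (2 * h) x x'.
Proof.
rewrite mulr_sumr; under eq_bigr do rewrite bridgeE.
by rewrite -Ppow_add addnn -mul2n.
Qed.

Fixpoint Qw (d : nat) (s : seq V) : R :=
  match s with
  | x :: ((x' :: _) as s') => Ppow P d x x' * Qw d s'
  | _ => 1
  end.

Lemma refine_cons (x : V) (s ys : seq V) : exists r, refine (x :: s) ys = x :: r.
Proof. case: s => [|a s]; case: ys => [|b ys] /=; by eexists. Qed.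

Lemma Qw_cons2 d (x x' : V) s : Qw d (x :: x' :: s) = Ppow P d x x' * Qw d (x' :: s).
Proof. by []. Qed.
Lemma bweight_cons2 h (x x' : V) s y ys :
  bweight P h (x :: x' :: s) (y :: ys) = bridge P h x y x' * bweight P h (x' :: s) ys.
Proof. by []. Qed.
Lemma refine_cons2 (x x' : V) s y ys :
  refine (x :: x' :: s) (y :: ys) = x :: y :: refine (x' :: s) ys.
Proof. by []. Qed.

Lemma Qw_refine h v zs : size zs = (size v).-1 ->
  Qw (2 * h) v * bweight P h v zs = Qw h (refine v zs).
Proof.
elim: v zs => [|x [|x' v'] IH] [|z zs] //; try by rewrite /= mulr1.
move=> [Hz]; have := IH zs Hz; rewrite -/(size (x' :: v')) => E.
rewrite Qw_cons2 bweight_cons2 refine_cons2.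
have [r Er] := refine_cons x' v' zs.
rewrite Er in E *; rewrite !Qw_cons2 -E.
by rewrite mulrACA bridgeE -!mulrA.
Qed.

Lemma sumseqS n F : sumseq n.+1 F = \sum_x sumseq n (fun s => F (x :: s)).
Proof. by []. Qed.

Lemma rearr h (x x' : V) v' n (G : V -> seq V -> R) :
  Qw (2 * h) (x :: x' :: v') * (\sum_y sumseq n (fun zs => bridge P h x y x' * G y zs))
  = Ppow P (2 * h) x x' * \sum_y bridge P h x y x' * (Qw (2 * h) (x' :: v') * sumseq n (G y)).
Proof.
rewrite Qw_cons2 -mulrA; congr (_ * _); rewrite mulr_sumr; apply: eq_bigr => y _.
rewrite !sumseq_mull; apply: sumseq_ext => s _; by rewrite mulrCA.
Qed.

Lemma sum_bweight h v :
  Qw (2 * h) v * sumseq (size v).-1 (bweight P h v) = Qw (2 * h) v.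
Proof.
elim: v => [|x [|x' v'] IH] //; try by rewrite /= mulr1.
have -> : sumseq (size (x :: x' :: v')).-1 (bweight P h (x :: x' :: v')) =
  \sum_y sumseq (size v') (fun zs => bridge P h x y x' * bweight P h (x' :: v') zs).
  by [].
have IH' : Qw (2 * h) (x' :: v') * sumseq (size v') (fun zs => bweight P h (x' :: v') zs)
  = Qw (2 * h) (x' :: v') by exact: IH.
rewrite rearr; under eq_bigr do rewrite IH'.
by rewrite -mulr_suml mulrA bridge_sum Qw_cons2.
Qed.

Lemma take_sum h v j (F : seq V -> R) : (0 < j <= size v)%N ->
  Qw (2 * h) v * sumseq (size v).-1 (fun zs => bweight P h v zs * F (take j.-1 zs))
  = Qw (2 * h) v * sumseq j.-1 (fun ys => bweight P h (take j v) ys * F ys).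
Proof.
elim: v j F => [|x v IH] [|[|j']] F // Hj.
  rewrite (@sumseq_ext _ _ (fun zs => bweight P h (x :: v) zs * F [::])); last first.
    by move=> s _; rewrite take0.
  rewrite -sumseq_mulr mulrA sum_bweight; congr (_ * _).
  by rewrite /= take0 /= mul1r.
case: v IH Hj => [|x' v'] IH Hj //.
have L1 : sumseq (size v').+1 (fun zs => bweight P h [:: x, x' & v'] zs * F (take j'.+1 zs))
  = \sum_y sumseq (size v') (fun zs => bridge P h x y x' *
        (bweight P h (x' :: v') zs * F (y :: take j' zs))).
  by rewrite sumseqS; apply: eq_bigr => y _; apply: sumseq_ext => s _ /=; rewrite mulrA.
have R1 : sumseq j'.+1 (fun ys => bweight P h [:: x, x' & take j' v'] ys * F ys)
  = \sum_y sumseq j' (fun ys => bridge P h x y x' *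
        (bweight P h (x' :: take j' v') ys * F (y :: ys))).
  by rewrite sumseqS; apply: eq_bigr => y _; apply: sumseq_ext => s _ /=; rewrite mulrA.
rewrite L1 R1 !rearr; congr (_ * _); apply: eq_bigr => y _; congr (_ * _).
exact: (IH j'.+1 (fun ys => F (y :: ys))).
Qed.

Lemma refine_take (v zs : seq V) j : size zs = (size v).-1 ->
  take (j.*2.-1) (refine v zs) = refine (take j v) (take j.-1 zs).
Proof.
elim: v zs j => [|x [|x' v'] IH] zs j Hz.
- by case: j; case: zs Hz.
- by case: j => [|j]; case: zs Hz.
- case: zs Hz => [|z zs] // [Hz].
  case: j => [|[|j]] //.
  rewrite refine_cons2.
  have -> : take j.+2 [:: x, x' & v'] = x :: take j.+1 (x' :: v') by [].
  have -> : take j.+2.-1 (z :: zs) = z :: take j zs by [].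
  have -> : (j.+2).*2.-1 = ((j.+1).*2.-1).+2 by [].
  have -> : take ((j.+1).*2.-1).+2 [:: x, z & refine (x' :: v') zs]
    = x :: z :: take ((j.+1).*2.-1) (refine (x' :: v') zs) by [].
  rewrite (IH zs j.+1 Hz).
  have -> : take j.+1 (x' :: v') = x' :: take j v' by [].
  by [].
Qed.

Lemma size_refine (v zs : seq V) : size zs = (size v).-1 ->
  size (refine v zs) = (size v).*2.-1.
Proof.
elim: v zs => [|x [|x' v'] IH] [|z zs] //= Hz.
case: Hz => Hz; have := IH zs Hz; rewrite /= => ->; by [].
Qed.

Lemma refine_sub (v zs : seq V) : {subset v <= refine v zs}.
Proof.
elim: v zs => [|x [|x' v'] IH] [|z zs] y //.
rewrite refine_cons2 in_cons => /orP [/eqP ->|/(IH zs) H]; first by rewrite in_cons eqxx.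
by rewrite !in_cons H !orbT.
Qed.

Lemma nd_mono (a b : seq V) : {subset a <= b} -> (ndistinct a <= ndistinct b)%N.
Proof.
move=> H; apply: uniq_leq_size; first exact: undup_uniq.
by move=> y; rewrite !mem_undup => /H.
Qed.

Lemma trunc_take rho p (w : seq V) : (0 < p)%N -> (rho <= ndistinct (take p w))%N ->
  trunc rho (take p w) = trunc rho w.
Proof.
move=> p0 Hh; case: (leqP (size w) p) => Hp; first by rewrite take_oversize.
have Hp' : (p <= size w)%N by apply: ltnW.
rewrite /trunc /first_hit size_takel //.
set a := (fun k => (rho <= ndistinct (take k.+1 w))%N).
have Hhas : has a (iota 0 p).
  apply/hasP; exists p.-1; first by rewrite mem_iota add0n prednK ?leqnn.
  by rewrite /a prednK.
have -> : size w = (p + (size w - p))%N by rewrite subnKC.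
rewrite iotaD find_cat Hhas.
rewrite (@eq_in_find _ _ a).
  rewrite take_takel //; move: Hhas; rewrite has_find size_iota; exact.
move=> k; rewrite mem_iota add0n => /andP [_ Hk].
by rewrite /a take_takel.
Qed.

Lemma trunc_hit rho (v : seq V) :
  size (trunc rho v) = size v \/ (rho <= ndistinct (trunc rho v))%N.
Proof.
rewrite /trunc /first_hit.
set a := (fun k => (rho <= ndistinct (take k.+1 v))%N).
case Hh : (has a (iota 0 (size v))).
  have Hlt : (find a (iota 0 (size v)) < size v)%N.
    by move: (Hh); rewrite has_find size_iota.
  right; have := nth_find 0%N Hh; by rewrite nth_iota // add0n.
left; move: Hh; rewrite has_find size_iota => /negbT; rewrite -leqNgt => H.
by rewrite take_oversize // (leq_trans H).
Qed.

Lemma K_lemma rho (v zs : seq V) j : size zs = (size v).-1 -> (0 < j <= size v)%N ->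
  (j = size v \/ (rho <= ndistinct (take j v))%N) ->
  trunc rho (refine (take j v) (take j.-1 zs)) = trunc rho (refine v zs).
Proof.
move=> Hz /andP [j0 jv] H; rewrite -refine_take //.
case: H => [->|H].
  by rewrite take_oversize // size_refine.
apply: trunc_take; first by rewrite -(prednK j0) doubleS.
apply: (leq_trans H); apply: nd_mono => y Hy.
rewrite refine_take //; exact: refine_sub.
Qed.

Lemma interleave m (x : V) (F : seq V -> R) :
  sumseq (m.*2) (fun c' => F (x :: c')) =
  sumseq m (fun c => sumseq m (fun zs => F (refine (x :: c) zs))).
Proof.
elim: m x F => [|m IH] x F; first by [].
transitivity (\sum_z \sum_y sumseq m (fun c => sumseq m (fun zs => F (x :: z :: refine (y :: c) zs)))).
  rewrite doubleS sumseqS; apply: eq_bigr => z _; rewrite sumseqS; apply: eq_bigr => y _.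
  exact: (IH y (fun c' => F (x :: z :: c'))).
rewrite exchange_big sumseqS; apply: eq_bigr => y _.
rewrite sumseq_sum; apply: sumseq_ext => c _; by rewrite sumseqS.
Qed.

Definition Tk rho (k : nat) (v : seq V) := if k is 0 then v else trunc rho v.

Lemma Tk_props rho k (v : seq V) : (0 < size v)%N ->
  [/\ take (size (Tk rho k v)) v = Tk rho k v,
      (0 < size (Tk rho k v) <= size v)%N &
      (size (Tk rho k v) = size v \/ (rho <= ndistinct (Tk rho k v))%N)].
Proof.
move=> v0; case: k => [|k] /=; first by rewrite take_size v0 leqnn; split => //; left.
split; last exact: trunc_hit.
  by rewrite /trunc size_take_min take_min take_size.
rewrite /trunc size_take_min geq_minr andbT.
by rewrite leq_min v0.
Qed.

Lemma main_claim L rho (w0 : V) k : (k <= L)%N -> forall s,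
  Wdist P L rho w0 k s =
  sumseq (2 ^ k) (fun c => Qw (2 ^ (L - k)) (w0 :: c) * (Tk rho k (w0 :: c) == s)%:R).
Proof.
elim: k => [|k IH] HkL s.
  rewrite expn0 subn0 sumseqS /=.
  case: s => [|a [|b [|c s']]] /=;
    try by (apply/esym; apply: big1 => x _; case: eqP => [/(congr1 size)//|_]; rewrite mulr0);
    try by (apply/esym; apply: big1 => x _; rewrite mulr0).
by rewrite big1 // => x _; rewrite mulr0.   case: (eqVneq a w0) => [->|ne].
    rewrite mul1r (bigD1 b) //= eqxx !mulr1 [X in _ + X]big1 ?addr0 //.
    by move=> x Hx; case: eqP => [[E]|_]; [rewrite E eqxx in Hx | rewrite mulr0].
  rewrite mul0r; apply/esym; apply: big1 => x _.
  by case: eqP => [[E]|_]; [rewrite E eqxx in ne | rewrite mulr0].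
set h := (2 ^ (L - k.+1))%N.
have Hd : (2 ^ (L - k) = 2 * h)%N by rewrite /h -expnS subnSK.
have IH' := IH (ltnW HkL).
pose G n (t : seq V) := sumseq n.-1 (fun ys => bweight P h t ys * (trunc rho (refine t ys) == s)%:R).
transitivity (\sum_(n < (2 ^ L).+2) \sum_(t : n.-tuple V)
   sumseq (2^k) (fun c => Qw (2*h) (w0::c) * ((Tk rho k (w0::c) == t)%:R * G n t))).
  rewrite [LHS]/= -/h; apply: eq_bigr => n _; apply: eq_bigr => t _.
  rewrite IH' (tuple_sumseq _ (fun ys => bweight P h t ys * (trunc rho (refine t ys) == s)%:R)).
  rewrite sumseq_mulr Hd; apply: sumseq_ext => c _; by rewrite mulrA.
under eq_bigr do rewrite sumseq_sum.
have E := interleave (2 ^ k) w0 (fun v => Qw h v * (Tk rho k.+1 v == s)%:R).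
cbv beta in E; rewrite sumseq_sum [in RHS]expnS [in RHS]mul2n E.
apply: sumseq_ext => c Hc.
set v := w0 :: c.
under eq_bigr do under eq_bigr do rewrite mulrA [_ * (_ == _)%:R]mulrC -mulrA.
have v0 : (0 < size v)%N by [].
have [Hu Hj Hhit] := Tk_props rho k v v0.
set u := Tk rho k v in Hu Hj Hhit *.
have Hsz : (size u < (2 ^ L).+2)%N.
  case/andP: Hj => _ Hj; apply: (leq_ltn_trans Hj); rewrite /v /= Hc ltnS ltnS.
  by rewrite leq_pexp2l // ltnW.
rewrite (collapse _ _ (fun n t => Qw (2 * h) v * G n t) Hsz).
rewrite (@sumseq_ext _ _ (fun zs => Qw (2*h) v * (bweight P h v zs * (trunc rho (refine v zs) == s)%:R))); last first.
  move=> zs Hzs; have Hz' : size zs = (size v).-1 by rewrite Hzs /v /= Hc.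
  by rewrite mulrA Qw_refine.
rewrite -sumseq_mull /G.
have := take_sum h v (size u) (fun ys => (trunc rho (refine u ys) == s)%:R) Hj.
cbv beta; rewrite Hu => <-.
congr (_ * _); rewrite /v /= Hc; apply: sumseq_ext => zs Hzs.
have Hhit' : size u = size v \/ (rho <= ndistinct (take (size u) v))%N by rewrite Hu.
have HK := K_lemma rho v zs (size u) (etrans Hzs (esym Hc)) Hj Hhit'.
by rewrite Hu in HK; rewrite HK.
Qed.

Lemma Qw1 (s : seq V) : Qw 1 s = pathw P s.
Proof.
elim: s => [|x s IH] //; case: s IH => [|x' s] IH //.
by rewrite Qw_cons2 Ppow1 IH.
Qed.

Lemma Tk_tau L rho (w0 : V) (c : seq V) :
  ((0 < L)%N || (1 < rho)%N) -> size c = (2 ^ L)%N ->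
  Tk rho L (w0 :: c) = take (tau L rho (w0 :: c)).+1 (w0 :: c).
Proof.
case: L => [|L] HL Hc.
  case: c Hc => [|x [|y c]] // _.
  rewrite /= /tau /first_hit /=.
  have -> : (rho <= ndistinct [:: w0])%N = false by move: HL => /= HL; rewrite /ndistinct /= leqNgt HL.
  by case: ifP.
rewrite /Tk /tau /trunc -minnSS take_min [take (2 ^ L.+1).+1 _]take_oversize //.
by rewrite size_take_min (leq_trans (geq_minr _ _)) //= Hc.
Qed.

End Proof.

Theorem mainTheorem6 (R : realFieldType) (V : finType) (P : V -> V -> R)
  (L rho : nat) (w0 : V) :
  stochastic P -> (1 <= rho)%N -> ((0 < L)%N || (1 < rho)%N) ->
  forall s : seq V, Wdist P L rho w0 L s = stopped_dist P L rho w0 s.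
Proof.
move=> Hst rho1 HL s.
rewrite (@main_claim _ _ _ Hst _ _ _ _ (leqnn L)) /stopped_dist (@tuple_sumseq _ _ _ (fun x =>
  pathw P (w0 :: x) * (take (tau L rho (w0 :: x)).+1 (w0 :: x) == s)%:R)).
rewrite subnn expn0; apply: sumseq_ext => c Hc.
by rewrite Qw1 Tk_tau.
Qed.
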